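(* For every nonnegative integer $l$ there exists a connected graph $G$ with $p(G)-k(G)+1=l$.
   Context: All graphs are finite and simple. For an acyclic digraph $D$, the competition graph $C(D)$ is the graph on $V(D)$ in which distinct $u,v$ are adjacent iff they have a common out-neighbor in $D$. The competition number $k(G)$ is the smallest $k\ge 0$ such that $G$ together with $k$ new isolated vertices is the competition graph of some acyclic digraph. The phylogeny graph $P(D)$ of an acyclic digraph $D$ is the graph on $V(D)$ in which distinct vertices $u,v$ are adjacent iff $(u,v)\in A(D)$, or $(v,u)\in A(D)$, or they have a common out-neighbor in $D$. A phylogeny digraph for a graph $G$ is an acyclic digraph $D$ such that $G$ is an induced subgraph of $P(D)$ and $D$ has no arc from a vertex of $V(D)\setminus V(G)$ to a vertex of $V(G)$. The phylogeny number $p(G)$ is the minimum of $|V(D)\setminus V(G)|$ over all phylogeny digraphs $D$ for $G$. *)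

(* Defs.v *)
From mathcomp Require Import all_boot.
Set Implicit Arguments. Unset Strict Implicit. Unset Printing Implicit Defensive.

Definition simple_graph (T : finType) (e : rel T) : Prop :=
  symmetric e /\ irreflexive e.

Definition connected_graph (T : finType) (e : rel T) : Prop :=
  (exists x : T, True) /\ forall x y : T, connect e x y.

(* A digraph on a finite type V is given by its arc relation a.
   It is acyclic iff it has no directed cycle (loops included):
   no arc (x,y) with y reaching x. *)
Definition acyclic (V : finType) (a : rel V) : Prop :=
  forall x y : V, a x y -> ~~ connect a y x.

Definition common_out (V : finType) (a : rel V) (u v : V) : bool :=
  [exists w, a u w && a v w].

Definition add_isolated (T : finType) (e : rel T) (k : nat) : rel (T + 'I_k) :=
  fun u v => match u, v with inl x, inl y => e x y | _, _ => false end.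

(* G ∪ I_k is the competition graph of the acyclic digraph a. *)
Definition competition_realizes (T : finType) (e : rel T) (k : nat)
  (a : rel (T + 'I_k)) : Prop :=
  acyclic a /\
  forall u v : T + 'I_k, u != v -> add_isolated e u v = common_out a u v.

Definition competition_ok (T : finType) (e : rel T) (k : nat) : Prop :=
  exists a : rel (T + 'I_k), competition_realizes e a.

Definition is_competition_number (T : finType) (e : rel T) (k : nat) : Prop :=
  competition_ok e k /\ forall k', competition_ok e k' -> k <= k'.

(* A phylogeny digraph for G with m extra vertices: acyclic digraph on
   T + 'I_m, G is the induced subgraph of P(D) on T, and there is no arc
   from an extra vertex to a vertex of G. *)
Definition phylogeny_digraph (T : finType) (e : rel T) (m : nat)
  (a : rel (T + 'I_m)) : Prop :=
  [/\ acyclic a,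
      (forall x y : T, x != y ->
         e x y = [|| a (inl x) (inl y), a (inl y) (inl x)
                   | common_out a (inl x) (inl y)]) &
      (forall (i : 'I_m) (x : T), ~~ a (inr i) (inl x))].

Definition phylogeny_ok (T : finType) (e : rel T) (m : nat) : Prop :=
  exists a : rel (T + 'I_m), phylogeny_digraph e a.

Definition is_phylogeny_number (T : finType) (e : rel T) (p : nat) : Prop :=
  phylogeny_ok e p /\ forall p', phylogeny_ok e p' -> p <= p'.

(* Main.v *)
Require Import Defs.
From mathcomp Require Import all_boot zify.
Set Implicit Arguments. Unset Strict Implicit. Unset Printing Implicit Defensive.

Lemma rank_acyclic (V : finType) (a : rel V) (r : V -> nat) :
  (forall x y, a x y -> r x < r y) -> acyclic a.
Proof.
move=> H x y axy; apply/negP => /connectP [p pth xE].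
have: r y <= r (last y p).
  elim: (p) (y) pth => [|z q IH] u //= /andP [ayz pz].
  exact: leq_trans (ltnW (H _ _ ayz)) (IH _ pz).
by rewrite -xE leqNgt (H _ _ axy).
Qed.

Lemma acyc_irr (V : finType) (a : rel V) x : acyclic a -> ~~ a x x.
Proof. by move=> H; apply/negP => axx; move: (H _ _ axx); rewrite connect0. Qed.

Lemma sink_exists (V : finType) (a : rel V) (x0 : V) :
  acyclic a -> exists x, forall y, ~~ a x y.
Proof.
move=> H.
pose f x := #|[set y | connect a x y]|.
have [x _ Hx] := @arg_minnP V x0 predT f isT.
exists x => y; apply/negP => axy.
have := Hx y isT; rewrite /f leqNgt => /negP; apply.
apply: proper_card; rewrite properE; apply/andP; split.
  apply/subsetP => z; rewrite !inE => cyz.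
  by apply: connect_trans cyz; apply: connect1.
apply/subsetPn; exists x; first by rewrite inE connect0.
by rewrite inE; apply: H.
Qed.

Lemma source_exists (V : finType) (a : rel V) (x0 : V) :
  acyclic a -> exists x, forall y, ~~ a y x.
Proof.
move=> H.
pose f x := #|[set y | connect a y x]|.
have [x _ Hx] := @arg_minnP V x0 predT f isT.
exists x => y; apply/negP => ayx.
have := Hx y isT; rewrite /f leqNgt => /negP; apply.
apply: proper_card; rewrite properE; apply/andP; split.
  apply/subsetP => z; rewrite !inE => czy.
  by apply: connect_trans czy _; apply: connect1.
apply/subsetPn; exists x; first by rewrite inE connect0.
by rewrite inE; apply: H.
Qed.

Lemma connect_map (V W : finType) (r : rel V) (a : rel W) (f : V -> W) :
  (forall x y, r x y -> a (f x) (f y)) ->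
  forall x y, connect r x y -> connect a (f x) (f y).
Proof.
move=> H x y /connectP [p pth ->].
elim: p (x) pth => [|z p IH] u //= /andP [rxz pz].
apply: connect_trans (IH _ pz); exact: connect1 (H _ _ rxz).
Qed.

Section G.
Variable l : nat.
Local Notation n := l.+1.
Definition VT : finType := (('I_n + ('I_n * bool)) + bool)%type.

Definition ge (u v : VT) : bool :=
  match u, v with
  | inl (inl _), inr _ => true
  | inr _, inl (inl _) => true
  | inl (inr p), inl (inr q) => p != q
  | inl (inr _), inr b => b
  | inr b, inl (inr _) => b
  | _, _ => false
  end.

Lemma ge_simple : simple_graph ge.
Proof.
split.
  by move=> [[i|p]|b] [[j|q]|c] //=; rewrite eq_sym.
by move=> [[i|p]|b] //=; rewrite eqxx.
Qed.

Lemma ge_conn : connected_graph ge.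
Proof.
split; first by exists (inr true).
have cs : connect_sym ge by apply: sym_connect_sym; case: ge_simple.
have toX : forall x, connect ge x (inr true).
  move=> [[i|p]|[|]]; try by apply: connect1.
    exact: connect0.
  apply: (connect_trans (y := (inl (inl ord0) : VT))); exact: connect1.
by move=> x y; apply: connect_trans (toX x) _; rewrite cs.
Qed.
End G.

Section G.
Variable l : nat.
Local Notation n := l.+1.
Local Notation VT := (VT l).
Local Notation ge := (ge (l:=l)).

Definition ac (u v : VT + 'I_1) : bool :=
  match u, v with
  | inl (inl (inl i)), inl (inl (inr (j, _))) => i == j
  | inl (inr b), inl (inl (inr (_, c))) => b == c
  | inl (inr true), inr _ => true
  | inl (inl (inr _)), inr _ => true
  | _, _ => false
  end.

Lemma ac_acyclic : acyclic ac.
Proof.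
apply: (@rank_acyclic _ _ (fun u => match u with
   | inl (inl (inr _)) => 1 | inr _ => 2 | _ => 0 end)).
by move=> [[[i|[j b]]|[|]]|?] [[[i'|[j' b']]|[|]]|?].
Qed.

Lemma comp1 : competition_ok ge 1.
Proof.
exists ac; split; first exact: ac_acyclic.
move=> [[[i|[i b]]|[|]]|o] [[[j|[j c]]|[|]]|o'] //= Hne.
all: try (apply/esym/existsP => -[[[[k|[k d]]|[|]]|o''] /andP [h1 h2]] //=).
- by move: h1 h2 Hne => /= /eqP -> /eqP ->; rewrite eqxx.
- by apply/esym/existsP; exists (inl (inl (inr (i, true)))); rewrite /= eqxx.
- by apply/esym/existsP; exists (inl (inl (inr (i, false)))); rewrite /= eqxx.
- have -> : ((i, b) != (j, c)) by apply: contraNneq Hne => ->.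
  by apply/esym/existsP; exists (inr ord0).
- by apply/esym/existsP; exists (inr ord0).
- by apply/esym/existsP; exists (inl (inl (inr (j, true)))); rewrite /= eqxx.
- by apply/esym/existsP; exists (inr ord0).
- by move: h1 h2 => /=; case: d.
- by apply/esym/existsP; exists (inl (inl (inr (j, false)))); rewrite /= eqxx.
- by move: h1 h2 => /=; case: d.
Qed.

End G.

Lemma ge_nbr (l : nat) (t : VT l) : exists t', ge t t'.
Proof.
case: t => [[i|[i b]]|[|]].
- by exists (inr true).
- by exists (inr true).
- by exists (inl (inl ord0)).
- by exists (inl (inl ord0)).
Qed.

Lemma comp_lb (l : nat) k : competition_ok (ge (l:=l)) k -> 1 <= k.
Proof.
case: k => // -[a [acy H]].
have [[t|[j ?]]] := sink_exists (inl (inr true)) acy => // Hs.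
have [t' Ht'] := ge_nbr t.
have tne : t != t' by apply: contraTneq Ht' => <-; case: (ge_simple l) => _ ->.
have := H (inl t) (inl t'); rewrite /= (inj_eq (@inl_inj _ _)) tne Ht' => /(_ isT).
by move/esym/existsP => [w /andP [h _]]; move: (Hs w); rewrite h.
Qed.

Lemma comp_num (l : nat) : is_competition_number (ge (l:=l)) 1.
Proof. split; [exact: comp1 | exact: comp_lb]. Qed.

Section G.
Variable l : nat.
Local Notation n := l.+1.
Local Notation VT := (VT l).
Local Notation ge := (ge (l:=l)).

Definition ap (u v : VT + 'I_l) : bool :=
  match u, v with
  | inl (inr true), inl (inl (inl _)) => true
  | inl (inl (inl i)), inl (inr false) => val i == 0
  | inl (inr false), inr _ => true
  | inl (inl (inl i)), inr j => val i == (val j).+1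
  | inl (inr true), inl (inl (inr _)) => true
  | inl (inl (inr p)), inl (inl (inr q)) => enum_rank p < enum_rank q
  | _, _ => false
  end.

Lemma ap_acyclic : acyclic ap.
Proof.
apply: (@rank_acyclic _ _ (fun u => match u with
   | inl (inr true) => 0 | inl (inl (inl _)) => 1 | inl (inr false) => 2
   | inr _ => 3 | inl (inl (inr p)) => 4 + enum_rank p end)).
move=> [[[i|p]|[|]]|?] [[[i'|p']|[|]]|?] //=.
Qed.

Lemma phyl_ub : phylogeny_ok ge l.
Proof.
exists ap; split; first exact: ap_acyclic; last by [].
move=> [[i|[i b]]|[|]] [[j|[j c]]|[|]] //= Hne.
all: try (apply/esym/existsP => -[[[[k|[k d]]|[|]]|o''] /andP [h1 h2]] //=).
- move: h1 h2 => /= /eqP h1 /eqP h2.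
  by move: Hne; rewrite (_ : i = j) ?eqxx //; apply: val_inj; rewrite /= h1 h2.
- move: h1 h2 => /= /eqP h1 /eqP h2.
  by move: Hne; rewrite (_ : i = j) ?eqxx //; apply: val_inj; rewrite /= h1 h2.
- case: eqP => [//|/eqP i0].
  have hi : (nat_of_ord i).-1 < l by case: i i0 => -[|k] Hk.
  move: i0; rewrite -lt0n => i0.
  apply/esym/existsP; exists (inr (Ordinal hi)); by rewrite /= (prednK i0) eqxx.
- have -> : ((i, b) != (j, c)) by apply: contraNneq Hne => ->.
  have : enum_rank (i, b) != enum_rank (j, c).
    by rewrite (inj_eq enum_rank_inj); apply: contraNneq Hne => ->.
  by rewrite neq_ltn => /orP [->|->]; rewrite ?orbT.
- case: eqP => [//|/eqP i0].
  have hi : (nat_of_ord j).-1 < l by case: j i0 => -[|k] Hk.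
  move: i0; rewrite -lt0n => i0.
  apply/esym/existsP; exists (inr (Ordinal hi)); by rewrite /= (prednK i0) eqxx.
Qed.

End G.

Section LB.
Variable l : nat.
Local Notation n := l.+1.
Local Notation VT := (VT l).
Local Notation ge := (ge (l:=l)).
Variable m : nat.
Variable a : rel (VT + 'I_m).
Hypothesis acy : acyclic a.
Hypothesis ind : forall x y : VT, x != y ->
         ge x y = [|| a (inl x) (inl y), a (inl y) (inl x)
                   | common_out a (inl x) (inl y)].

Lemma NC (x y : VT) w : x != y -> ge x y = false ->
  a (inl x) w -> a (inl y) w -> False.
Proof.
move=> xy gxy h1 h2; move: (ind xy); rewrite gxy => /esym /norP [_ /norP [_]].
by move/existsP; apply; exists w; rewrite h1 h2.
Qed.

Lemma arcE (x y : VT) : a (inl x) (inl y) -> ge x y.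
Proof.
move=> h; have xy : x != y.
  by apply: contraTneq h => ->; apply: acyc_irr.
by rewrite ind // h.
Qed.

Definition hv (s : 'I_n + bool) : VT :=
  match s with inl i => inl (inl i) | inr b => inr b end.
Definition rH (s t : 'I_n + bool) := a (inl (hv s)) (inl (hv t)).

Lemma rH_acyclic : acyclic rH.
Proof.
move=> x y h; apply/negP => c.
have := acy h; rewrite (connect_map (f := fun s => inl (hv s)) _ c) //.
Qed.

Definition zz (i : 'I_n) : VT := inl (inl i).
Definition vv (b : bool) : VT := inr b.

Definition psi (p : 'I_n * bool) : ('I_n + bool) + 'I_m :=
  let: (i, b) := p in
  if a (inl (zz i)) (inl (vv b)) then inl (inr b)
  else if a (inl (vv b)) (inl (zz i)) then inl (inl i)
  else if [pick j | a (inl (zz i)) (inr j) && a (inl (vv b)) (inr j)] is Some j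
       then inr j else inl (inr b).

Lemma psiP i b :
  [\/ a (inl (zz i)) (inl (vv b)) /\ psi (i, b) = inl (inr b),
       a (inl (vv b)) (inl (zz i)) /\ psi (i, b) = inl (inl i) |
       exists j, [/\ a (inl (zz i)) (inr j), a (inl (vv b)) (inr j) &
                     psi (i, b) = inr j]].
Proof.
rewrite /psi.
case h1: (a (inl (zz i)) (inl (vv b))); first by apply: Or31.
case h2: (a (inl (vv b)) (inl (zz i))); first by apply: Or32.
case: pickP => [j /andP [a1 a2]|none]; first by apply: Or33; exists j.
exfalso.
have : ge (zz i) (vv b) by [].
rewrite ind // h1 h2 /= => /existsP [[y|j] /andP [a1 a2]]; last first.
  by move: (none j); rewrite a1 a2.
move: (arcE a1) (arcE a2); case: y {a1 a2} => [[?|?]|c] //= _; by case: b {h1 h2} c => -[].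

Qed.
Lemma psi_inj : injective psi.
Proof.
have zne : forall i1 i2, i1 != i2 -> zz i1 != zz i2.
  by move=> i1 i2; apply: contra => /eqP [->].
have vne : forall b1 b2 : bool, b1 != b2 -> vv b1 != vv b2.
  by move=> b1 b2; apply: contra => /eqP [->].
move=> [i1 b1] [i2 b2].
case: (psiP i1 b1) => [[h1 ->]|[h1 ->]|[j1 [h1 h1' ->]]];
case: (psiP i2 b2) => [[h2 ->]|[h2 ->]|[j2 [h2 h2' ->]]] // [e].
- subst b2; case: (eqVneq i1 i2) => [->//|ne].
  by case: (NC (zne _ _ ne) _ h1 h2).
- subst i2; case: (eqVneq b1 b2) => [->//|ne].
  by case: (NC (vne _ _ ne) _ h1 h2).
- subst j2; case: (eqVneq i1 i2) => [->|ne]; last first.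
    by case: (NC (zne _ _ ne) _ h1 h2).
  case: (eqVneq b1 b2) => [->//|ne].
  by case: (NC (vne _ _ ne) _ h1' h2').
Qed.

Lemma lb_count : l <= m.
Proof.
have [s0 Hs0] := source_exists (inr true) rH_acyclic.
have avoid : forall p, psi p != inl s0.
  move=> [i b]; case: (psiP i b) => [[h ->]|[h ->]|[j [_ _ ->]]] //.
  - by apply/eqP => -[E]; move: (Hs0 (inl i)); rewrite /rH -E h.
  - by apply/eqP => -[E]; move: (Hs0 (inr b)); rewrite /rH -E h.
have := card_imset (mem [set: 'I_n * bool]) psi_inj.
rewrite cardsT card_prod card_ord card_bool => E.
have : #|psi @: [set: 'I_n * bool]| <= #|[set~ (inl s0 : ('I_n + bool) + 'I_m)]|.
  apply: subset_leq_card; apply/subsetP => x /imsetP [p _ ->].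
  by rewrite !inE avoid.
rewrite E cardsC1 card_sum card_sum card_ord card_bool card_ord.
lia.
Qed.
End LB.

Theorem mainTheorem11 :
  forall l : nat,
  exists (T : finType) (e : rel T),
    [/\ simple_graph e, connected_graph e &
        exists p k : nat,
          [/\ is_phylogeny_number e p, is_competition_number e k &
              p + 1 = k + l]].
Proof.
move=> l; exists (VT l), (ge (l:=l)); split.
- exact: ge_simple.
- exact: ge_conn.
exists l, 1; split.
- split; first exact: phyl_ub.
  by move=> p' [a [acy ind _]]; exact: lb_count acy ind.
- exact: comp_num.
- by rewrite addnC.
Qed.
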